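(* Let $\Omega$ be a countably infinite set and $S=\mathrm{Sym}(\Omega)$. The countable subgroups of $S$ form an equivalence class under $\approx$, and every countable subgroup $G$ satisfies $G\prec S_{(A)}$ for every partition $A$ of $\Omega$ having a common finite bound on the cardinalities of its members and infinitely many members of cardinality $>1$. Moreover, for a subgroup $G\le S$ the following are equivalent: (i) $G$ is countable and closed; (ii) there exists a finite subset $\Gamma\subseteq\Omega$ such that $G_{(\Gamma)}=\{1\}$; (iii) $G$ is discrete.
   Context: $\mathrm{Sym}(\Omega)$ is the group of all permutations of $\Omega$ (acting on the right). $S$ carries the function topology (pointwise convergence, $\Omega$ discrete); ''closed'' and ''discrete'' refer to this topology (discrete meaning discrete in the subspace topology). For a partition $A$ of $\Omega$, $S_{(A)}=\{f\in S:\Sigma f=\Sigma\text{ for all }\Sigma\in A\}$. $G_{(\Gamma)}$ denotes the pointwise stabilizer of $\Gamma$ in $G$. For subgroups $G_1,G_2\le S$: $G_1\preccurlyeq G_2$ means there is a finite $U\subseteq S$ with $G_1\le\langle G_2\cup U\rangle$; $G_1\approx G_2$ means both $G_1\preccurlyeq G_2$ and $G_2\preccurlyeq G_1$; $G_1\prec G_2$ means $G_1\preccurlyeq G_2$ and not $G_2\preccurlyeq G_1$. *)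

(* Defs.v *)
From mathcomp Require Import all_boot.
From mathcomp Require Import boolp classical_sets cardinality.
Set Implicit Arguments. Unset Strict Implicit. Unset Printing Implicit Defensive.
Local Open Scope classical_set_scope.

(* Sym(Omega): all bijections of T (elements are functions T -> T; the group
   law is composition, identity is id). *)
Definition Sym (T : Type) : set (T -> T) := [set f | bijective f].
Arguments Sym T : clear implicits.

Definition subgroup (T : Type) (G : set (T -> T)) : Prop :=
  [/\ G `<=` Sym T, G id,
      (forall f g, G f -> G g -> G (f \o g))
    & (forall f, G f -> exists g, [/\ G g, cancel f g & cancel g f])].

Inductive gen (T : Type) (X : set (T -> T)) : (T -> T) -> Prop :=
| gen_base f : X f -> gen X f
| gen_id : gen X id
| gen_comp f g : gen X f -> gen X g -> gen X (f \o g)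
| gen_inv f g : gen X f -> cancel f g -> cancel g f -> gen X g.

Definition preceq (T : Type) (G1 G2 : set (T -> T)) : Prop :=
  exists U : set (T -> T),
    [/\ finite_set U, U `<=` Sym T & G1 `<=` gen (G2 `|` U)].

Definition approx (T : Type) (G1 G2 : set (T -> T)) : Prop :=
  preceq G1 G2 /\ preceq G2 G1.

Definition prec (T : Type) (G1 G2 : set (T -> T)) : Prop :=
  preceq G1 G2 /\ ~ preceq G2 G1.

Definition setwise_stab (T : Type) (A : set (set T)) : set (T -> T) :=
  [set f | Sym T f /\ forall Sigma, A Sigma -> f @` Sigma = Sigma].

Definition pt_stab (T : Type) (G : set (T -> T)) (Gamma : set T) : set (T -> T) :=
  [set g | G g /\ forall x, Gamma x -> g x = x].

(* Function topology on S (pointwise convergence, Omega discrete):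
   basic open neighbourhoods of f in S are
   { g in S : g x = f x for all x in Gamma }, Gamma finite. *)
Definition agree_on (T : Type) (Gamma : set T) (f g : T -> T) : Prop :=
  forall x, Gamma x -> g x = f x.

Definition closed_in_Sym (T : Type) (G : set (T -> T)) : Prop :=
  forall f, Sym T f -> ~ G f ->
    exists Gamma : set T, finite_set Gamma /\
      forall g, Sym T g -> agree_on Gamma f g -> ~ G g.

Definition discrete_in_Sym (T : Type) (G : set (T -> T)) : Prop :=
  forall g, G g -> exists Gamma : set T, finite_set Gamma /\
    forall h, G h -> agree_on Gamma g h -> h = g.

(* Main.v *)
Require Import Defs.
From mathcomp Require Import all_boot all_order all_algebra.
From mathcomp Require finmap.
From mathcomp Require Import boolp classical_sets cardinality.
From mathcomp Require Import zify.

Module MBase.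
Set Implicit Arguments. Unset Strict Implicit. Unset Printing Implicit Defensive.
Local Open Scope classical_set_scope.
Local Open Scope card_scope.

Definition sbij {T U} (A : set T) (B : set U) (f : T -> U) :=
  [/\ (forall x, A x -> B (f x)), (forall x y, A x -> A y -> f x = f y -> x = y)
    & (forall y, B y -> exists2 x, A x & f x = y)].

Lemma card_eq_sbij T U (u0 : U) (A : set T) (B : set U) :
  A #= B -> exists f, sbij A B f.
Proof.
move/card_bijP => [f [g fK gK]].
pose F x := match pselect (A x) with
            | left Ax => val (f (exist _ x (mem_set Ax))) | right _ => u0 end.
exists F; split.
- move=> x Ax; rewrite /F; case: pselect => // Ax'.
  exact: set_mem (valP (f _)).
- move=> x y Ax Ay; rewrite /F; case: pselect => // Ax'; case: pselect => // Ay'.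
  move=> /val_inj /(can_inj fK) [] //.
- move=> y By; pose b : B := exist _ y (mem_set By).
  have Ax : A (val (g b)) by exact: set_mem (valP (g b)).
  exists (val (g b)) => //; rewrite /F; case: pselect => // Ax'.
  have -> : exist _ (val (g b)) (mem_set Ax') = g b by apply: val_inj.
  by rewrite gK.
Qed.

Lemma countinf_sbij T U (u0 : U) (A : set T) (B : set U) :
  countable A -> infinite_set A -> countable B -> infinite_set B ->
  exists f, sbij A B f.
Proof.
move=> cA iA cB iB; apply: card_eq_sbij => //.
apply: card_eq_trans (eq_card_nat cA iA) _.
by rewrite card_eq_sym; apply: eq_card_nat.
Qed.

Lemma sbijT_bij T U (f : T -> U) : sbij setT setT f -> bijective f.
Proof.
move=> [_ fi fs].
pose g y := projT1 (cid2 (fs y I)).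
have fg : cancel g f by move=> y; rewrite /g; case: cid2.
exists g => //.
by move=> x; apply: fi => //; rewrite fg.
Qed.

Lemma bij_sbijT T (f : T -> T) : bijective f -> sbij setT setT f.
Proof.
move=> [g fK gK]; split=> //.
- by move=> x y _ _ /(can_inj fK).
- by move=> y _; exists (g y).
Qed.

Lemma sbij_id T (A : set T) : sbij A A id.
Proof. by split=> // y Ay; exists y. Qed.

Lemma sbij_glue T U (A1 A2 : set T) (B1 B2 : set U) f1 f2 :
  sbij A1 B1 f1 -> sbij A2 B2 f2 ->
  (forall x, A1 x -> A2 x -> False) -> (forall y, B1 y -> B2 y -> False) ->
  sbij (A1 `|` A2) (B1 `|` B2) (fun x => if pselect (A1 x) then f1 x else f2 x).
Proof.
move=> [h1 i1 s1] [h2 i2 s2] dA dB; split.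
- move=> x [Ax|Ax]; case: pselect => Ax'.
  + by left; apply: h1.
  + by [].
  + by case: (dA x).
  + by right; apply: h2.
- move=> x y Ax Ay; case: pselect => Ax'; case: pselect => Ay'.
  + by apply: i1.
  + move=> /= e; have Ay2 : A2 y by case: Ay.
    by case: (dB (f1 x)); [apply: h1|rewrite e; apply: h2].
  + move=> /= e; have Ax2 : A2 x by case: Ax.
    by case: (dB (f1 y)); [apply: h1|rewrite -e; apply: h2].
  + by apply: i2; [case: Ax|case: Ay].
- move=> y [By|By].
  + have [x Ax <-] := s1 y By; exists x; first by left.
    by case: pselect.
  + have [x Ax <-] := s2 y By; exists x; first by right.
    by case: pselect => // Ax'; case: (dA x).
Qed.

Lemma sbij_eq T U (A A' : set T) (B B' : set U) f :
  A = A' -> B = B' -> sbij A B f -> sbij A' B' f.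
Proof. by move=> -> ->. Qed.

Lemma sbij_ext T U (A : set T) (B : set U) f g :
  (forall x, A x -> f x = g x) -> sbij A B f -> sbij A B g.
Proof.
move=> fg [h i s]; split.
- by move=> x Ax; rewrite -fg //; apply: h.
- by move=> x y Ax Ay; rewrite -!fg //; apply: i.
- by move=> y By; have [x Ax <-] := s y By; exists x => //; rewrite fg.
Qed.

Lemma gen_sub T (X Y : set (T -> T)) : X `<=` Y -> gen X `<=` gen Y.
Proof.
move=> XY f; elim=> [g Xg|| g h _ Hg _ Hh| g h _ Hg gh hg].
- by apply: gen_base; apply: XY.
- exact: gen_id.
- exact: gen_comp.
- exact: gen_inv Hg gh hg.
Qed.

Lemma gen_bij_inv T (X : set (T -> T)) f g :
  gen X f -> cancel f g -> cancel g f -> gen X g.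
Proof. move=> Hf fg gf; exact: gen_inv Hf fg gf. Qed.

Lemma gen_conj T U (X : set (T -> T)) (phi : T -> U) (phi' : U -> T) w :
  cancel phi phi' -> cancel phi' phi ->
  gen X w -> gen [set phi \o u \o phi' | u in X] (phi \o w \o phi').
Proof.
move=> pK pK'; elim=> [g Xg|| g h _ Hg _ Hh| g h _ Hg gh hg].
- by apply: gen_base; exists g.
- have -> : phi \o id \o phi' = id by apply: funext => x /=; rewrite pK'.
  exact: gen_id.
- have -> : phi \o (g \o h) \o phi' = (phi \o g \o phi') \o (phi \o h \o phi').
    by apply: funext => x /=; rewrite pK.
  exact: gen_comp.
- by apply: gen_inv Hg _ _ => x /=; rewrite pK ?gh ?hg pK'.
Qed.


End MBase.
Import MBase.

Module MStep1.
Set Implicit Arguments. Unset Strict Implicit. Unset Printing Implicit Defensive.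
Import Order.TTheory GRing.Theory Num.Theory.
Local Open Scope classical_set_scope.
Local Open Scope ring_scope.

Section Layers.
Variable V : Type.
Notation W := ((int * int) * V)%type.

Definition sig_ (k : int) (w : W) : W := ((w.1.1 + k, w.1.2), w.2).
Definition Qm (w : W) : W := if 0 <= w.1.1 then ((w.1.1, w.1.2 + 1), w.2) else w.
Definition Qi (w : W) : W := if 0 <= w.1.1 then ((w.1.1, w.1.2 - 1), w.2) else w.
Definition Af (F : nat -> V -> V) (w : W) : W :=
  if (0 <= w.1.1) && (0 <= w.1.2) then (w.1, F (absz w.1.1) w.2) else w.
Definition Lf (f : V -> V) (w : W) : W := if w.1 == (0, 0) then (w.1, f w.2) else w.
Definition Sc (i : int) (w : W) : W := if w.1.1 == i then ((w.1.1, w.1.2 + 1), w.2) else w.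
Definition Sci (i : int) (w : W) : W := if w.1.1 == i then ((w.1.1, w.1.2 - 1), w.2) else w.

Lemma sigK k : cancel (sig_ k) (sig_ (- k)).
Proof. by move=> [[m n] v]; rewrite /sig_ /=; congr (_, _, _); lia. Qed.
Lemma sigKV k : cancel (sig_ (- k)) (sig_ k).
Proof. by move=> [[m n] v]; rewrite /sig_ /=; congr (_, _, _); lia. Qed.
Lemma QmK : cancel Qm Qi.
Proof.
move=> [[m n] v]; rewrite /Qm /Qi /=; case h: (0 <= m) => /=; rewrite ?h //.
by congr (_, _, _); lia.
Qed.
Lemma QiK : cancel Qi Qm.
Proof.
move=> [[m n] v]; rewrite /Qm /Qi /=; case h: (0 <= m) => /=; rewrite ?h //.
by congr (_, _, _); lia.
Qed.
Lemma AfK F G : (forall i, cancel (F i) (G i)) -> cancel (Af F) (Af G).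
Proof.
move=> FG [[m n] v]; rewrite /Af /=; case h: ((0 <= m) && (0 <= n)) => /=; rewrite ?h //.
by rewrite FG.
Qed.
Lemma ScK i : cancel (Sc i) (Sci i).
Proof.
move=> [[m n] v]; rewrite /Sc /Sci /=; case h: (m == i) => /=; rewrite ?h //.
by congr (_, _, _); lia.
Qed.
Lemma SciK i : cancel (Sci i) (Sc i).
Proof.
move=> [[m n] v]; rewrite /Sc /Sci /=; case h: (m == i) => /=; rewrite ?h //.
by congr (_, _, _); lia.
Qed.

Ltac split_if := match goal with |- context [if ?c then _ else _] =>
  lazymatch c with context [if _ then _ else _] => fail
  | _ => let h := fresh "h" in case h: c => /= end end.
Ltac solve_ifs := repeat split_if; try (by congr (_, _, _); lia); try lia.

Lemma Sc_eq (i : int) :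
  Sc i = sig_ i \o Qm \o sig_ (- i) \o sig_ (i + 1) \o Qi \o sig_ (- (i + 1)).
Proof.
apply: funext => -[[m n] v]; rewrite /Sc /sig_ /Qm /Qi /=.
solve_ifs.
Qed.

Lemma Lf_eq F G (i : nat) : (forall j, cancel (G j) (F j)) ->
  Lf (F i) = sig_ (- i%:Z) \o Af F \o Sc i%:Z \o Af G \o Sci i%:Z \o sig_ i%:Z.
Proof.
move=> FG; apply: funext => -[[m n] v]; rewrite /Lf /sig_ /Af /Sc /Sci /= !xpair_eqE.
solve_ifs.
all: rewrite ?FG.
- have E : m + i%:Z = i%:Z by lia.
  by rewrite E /=; congr (_, _, _); lia.
all: congr (_, _, _); lia.
Qed.

Lemma sig0 : sig_ 0 = id.
Proof. by apply: funext => -[[m n] v]; rewrite /sig_ /= addr0. Qed.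

Lemma sigS (k : int) : sig_ (k + 1) = sig_ 1 \o sig_ k.
Proof. by apply: funext => -[[m n] v]; rewrite /sig_ /= addrA. Qed.

Lemma step1 (F G : nat -> V -> V) :
  (forall j, cancel (F j) (G j)) -> (forall j, cancel (G j) (F j)) ->
  exists U : set (W -> W),
    [/\ finite_set U, U `<=` Sym W & forall i, gen U (Lf (F i))].
Proof.
move=> FG GF.
exists [set sig_ 1; Qm; Af F]; split.
- exact: finite_set3.
- move=> f [[->|->]|->].
  + by exists (sig_ (-1)); [exact: sigK|exact: (@sigKV 1)].
  + by exists Qi; [exact: QmK|exact: QiK].
  + by exists (Af G); apply: AfK.
- set U := [set sig_ 1; Qm; Af F].
  have gs1 : gen U (sig_ 1) by apply: gen_base; left; left.
  have gQ : gen U Qm by apply: gen_base; left; right.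
  have gA : gen U (Af F) by apply: gen_base; right.
  have gsn : forall n : nat, gen U (sig_ n%:Z).
    elim=> [|n IH]; first by rewrite sig0; exact: gen_id.
    have -> : n.+1%:Z = n%:Z + 1 by lia.
    by rewrite sigS; apply: gen_comp.
  have gs : forall k : int, gen U (sig_ k).
    case=> n; first exact: gsn.
    rewrite NegzE; exact: gen_inv (gsn n.+1) (sigK _) (sigKV _).
  have gQi : gen U Qi by exact: gen_inv gQ QmK QiK.
  have gAG : gen U (Af G) by exact: gen_inv gA (AfK FG) (AfK GF).
  have gSc : forall i, gen U (Sc i).
    by move=> i; rewrite Sc_eq; repeat apply: gen_comp.
  have gSci : forall i, gen U (Sci i).
    by move=> i; exact: gen_inv (gSc i) (ScK i) (SciK i).
  by move=> i; rewrite (Lf_eq i GF); repeat apply: gen_comp.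
Qed.

End Layers.

End MStep1.
Import MStep1.

Module MStep2.
Set Implicit Arguments. Unset Strict Implicit. Unset Printing Implicit Defensive.
Import Order.TTheory GRing.Theory Num.Theory.
Local Open Scope classical_set_scope.
Local Open Scope card_scope.

Lemma inj_infinite T U (A : set T) (f : T -> U) :
  (forall x y, A x -> A y -> f x = f y -> x = y) -> infinite_set A ->
  infinite_set (f @` A).
Proof.
move=> fi iA fin; apply: iA.
have e : f @` A #= A.
  by apply: inj_card_eq => x y /set_mem Ax /set_mem Ay; apply: fi.
by rewrite -(eq_finite_set e).
Qed.

Lemma sbij_comp T U R (A : set T) (B : set U) (C : set R) f g :
  sbij A B f -> sbij B C g -> sbij A C (g \o f).
Proof.
move=> [fh fi fs] [gh gi gs]; split.
- by move=> x Ax; apply: gh; apply: fh.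
- move=> x y Ax Ay /= e; apply: fi => //; apply: gi => //; exact: fh.
- move=> z Cz; have [y By <-] := gs z Cz; have [x Ax <-] := fs y By.
  by exists x.
Qed.

Lemma sbij_img T U (A : set T) (f : T -> U) :
  (forall x y, A x -> A y -> f x = f y -> x = y) -> sbij A (f @` A) f.
Proof.
move=> fi; split.
- by move=> x Ax; exists x.
- exact: fi.
- by move=> y [x Ax <-]; exists x.
Qed.

Lemma split_inf (T : countType) (J : set T) : infinite_set J ->
  exists J1 J2 : set T, [/\ infinite_set J1, infinite_set J2,
     J1 `|` J2 = J & forall x, J1 x -> J2 x -> False].
Proof.
move=> iJ.
have [x0 _] := infinite_setN0 iJ.
have [e [eh ei es]] : exists e, sbij [set: nat] J e.
  by apply: countinf_sbij => //; exact: infinite_nat.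
exists (e @` [set (2 * n)%N | n in setT]), (e @` [set (2 * n).+1 | n in setT]); split.
- apply: inj_infinite; first by move=> x y _ _; apply: ei.
  apply: inj_infinite; last exact: infinite_nat.
  move=> x y _ _; lia.
- apply: inj_infinite; first by move=> x y _ _; apply: ei.
  apply: inj_infinite; last exact: infinite_nat.
  move=> x y _ _; lia.
- apply/seteqP; split.
  + by move=> x [[y [n _ <-] <-]|[y [n _ <-] <-]]; apply: eh.
  + move=> x Jx; have [n _ <-] := es x Jx.
    have := divn_eq n 2; have := ltn_pmod n (isT : (0 < 2)%N) => h1 h2.
    have [k [->|->]] : exists k, n = (2 * k)%N \/ n = (2 * k).+1.
      by exists (n %/ 2); lia.
    * by left; exists (2 * k)%N => //; exists k.
    * by right; exists (2 * k).+1 => //; exists k.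
- move=> x [y [n _ <-] <-] [z [m _ <-]] /ei ee.
  have := ee I I; lia.
Qed.

Section Moiety.
Variable V : countType.
Hypothesis infV : infinite_set [set: V].
Notation W := ((int * int) * V)%type.

Definition X : set W := [set w | w.1 = (0%R, 0%R)].
Definition symX (a : W -> W) := bijective a /\ forall w, ~ X w -> a w = w.

Lemma setUCX : X `|` ~` X = setT.
Proof. by apply/seteqP; split=> // w _; have [?|?] := pselect (X w); [left|right]. Qed.

Lemma bij_inv_fix (a a' : W -> W) w : cancel a a' -> cancel a' a -> a w = w -> a' w = w.
Proof. by move=> aK aK' e; rewrite -{1}e aK. Qed.

Lemma core (g g' : W -> W) (P1 P2 : set W) :
  cancel g g' -> cancel g' g ->
  (forall w, ~ X w -> P1 (g w)) ->
  P1 `|` P2 = X -> (forall w, P1 w -> P2 w -> False) ->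
  infinite_set P1 -> infinite_set P2 ->
  forall pi pi', cancel pi pi' -> cancel pi' pi ->
  infinite_set [set x | X x /\ X (pi x)] ->
  exists a b c, [/\ symX a, symX b, symX c & pi = a \o g \o b \o g' \o c].
Proof.
move=> gK gK' gY P12 dP iP1 iP2 pi pi' pK pK' iJ.
have [x0 _] := infinite_setN0 iP1.
have P1X : forall w, P1 w -> X w by move=> w ?; rewrite -P12; left.
have P2X : forall w, P2 w -> X w by move=> w ?; rewrite -P12; right.
set J := [set x | X x /\ X (pi x)] in iJ.
have [J1 [J2 [iJ1 iJ2 J12 dJ]]] := split_inf iJ.
have J1J : forall x, J1 x -> J x by move=> x ?; rewrite -J12; left.
have J2J : forall x, J2 x -> J x by move=> x ?; rewrite -J12; right.
have piinj : forall x y, pi x = pi y -> x = y by apply: can_inj pK.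
have [h hb] : exists h, sbij P1 J1 h by apply: countinf_sbij.
have iXJ1 : infinite_set (X `\` J1).
  apply: sub_infinite_set iJ2 => x J2x; split; first by case: (J2J x J2x).
  by move=> J1x; apply: (dJ x).
have [k1 k1b] : exists k, sbij P2 (X `\` J1) k by apply: countinf_sbij.
have iJ1' : infinite_set (pi @` J1) by apply: inj_infinite => // x y _ _; apply: piinj.
have iXJ1' : infinite_set (X `\` pi @` J1).
  have : infinite_set (pi @` J2) by apply: inj_infinite => // x y _ _; apply: piinj.
  apply: sub_infinite_set => _ [x J2x <-]; split; first by case: (J2J x J2x).
  by move=> [y J1y /piinj e]; apply: (dJ x) => //; rewrite -e.
have [k2 k2b] : exists k, sbij P2 (X `\` pi @` J1) k by apply: countinf_sbij.
pose ci := fun x => if pselect (P1 x) then h x else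
                    (fun x => if pselect (P2 x) then k1 x else id x) x.
have cib : sbij setT setT ci.
  have d1 : forall x, P2 x -> (~` X) x -> False.
    by move=> x P2x nXx; apply: nXx; apply: P2X.
  have d2 : forall y, (X `\` J1) y -> (~` X) y -> False by move=> y [] Xy _ nXy.
  have d3 : forall x, P1 x -> (P2 `|` ~` X) x -> False.
    by move=> x P1x [P2x|nXx]; [apply: (dP x)|apply: nXx; apply: P1X].
  have d4 : forall y, J1 y -> ((X `\` J1) `|` ~` X) y -> False.
    by move=> y J1y [[_ nJ1y]|nXy]; [apply: nJ1y|apply: nXy; case: (J1J y J1y)].
  have := sbij_glue hb (sbij_glue k1b (sbij_id (~` X)) d1 d2) d3 d4.
  apply: sbij_eq.
  - by rewrite setUA P12 setUCX.
  - rewrite setUA; apply/seteqP; split=> // w _.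
    have [Xw|Xw] := pselect (X w); last by right.
    by left; have [?|?] := pselect (J1 w); [left|right].
have [c ciK cK] := sbijT_bij cib.
have ciY : forall w, ~ X w -> ci w = w.
  move=> w nXw; rewrite /ci; case: pselect => P1w; first by case: nXw; exact: P1X.
  by case: pselect => P2w //; case: nXw; exact: P2X.
have pihb : sbij P1 (pi @` J1) (pi \o h).
  by apply: sbij_comp hb (sbij_img _) => x y _ _; apply: piinj.
pose a := fun x => if pselect (P1 x) then (pi \o h) x else
                    (fun x => if pselect (P2 x) then k2 x else id x) x.
have ab : sbij setT setT a.
  have d1 : forall x, P2 x -> (~` X) x -> False.
    by move=> x P2x nXx; apply: nXx; apply: P2X.
  have d2 : forall y, (X `\` pi @` J1) y -> (~` X) y -> False by move=> y [] Xy _ nXy.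
  have d3 : forall x, P1 x -> (P2 `|` ~` X) x -> False.
    by move=> x P1x [P2x|nXx]; [apply: (dP x)|apply: nXx; apply: P1X].
  have d4 : forall y, (pi @` J1) y -> ((X `\` pi @` J1) `|` ~` X) y -> False.
    move=> y [x J1x <-] [[_ nJ1y]|nXy]; first by apply: nJ1y; exists x.
    by apply: nXy; case: (J1J x J1x).
  have := sbij_glue pihb (sbij_glue k2b (sbij_id (~` X)) d1 d2) d3 d4.
  apply: sbij_eq.
  - by rewrite setUA P12 setUCX.
  - rewrite setUA; apply/seteqP; split=> // w _.
    have [Xw|Xw] := pselect (X w); last by right.
    by left; have [?|?] := pselect ((pi @` J1) w); [left|right].
have [a' aK aK'] := sbijT_bij ab.
have aY : forall w, ~ X w -> a w = w.
  move=> w nXw; rewrite /a; case: pselect => P1w; first by case: nXw; exact: P1X.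
  by case: pselect => P2w //; case: nXw; exact: P2X.
pose b := a' \o pi \o ci.
have bP1 : forall w, P1 w -> b w = w.
  move=> w P1w; rewrite /b /=.
  have -> : ci w = h w by rewrite /ci; case: pselect.
  have <- : a w = pi (h w) by rewrite /a; case: pselect.
  by rewrite aK.
exists a, (g' \o b \o g), c; split.
- split; [by exists a'|exact: aY].
- split.
  + have bb : bijective b.
      apply: bij_comp; last by exists c.
      by apply: bij_comp; [exists a|exists pi'].
    apply: bij_comp; last by exists g'.
    by apply: bij_comp => //; exists g.
  + by move=> w nXw /=; rewrite bP1 ?gK //; apply: gY.
- split; first by exists ci.
  by move=> w nXw; apply: (bij_inv_fix ciK cK); apply: ciY.
- apply: funext => x /=; rewrite !gK' /b /= cK.
  by rewrite aK'.
Qed.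

End Moiety.

End MStep2.
Import MStep2.

Module MStep3.
Set Implicit Arguments. Unset Strict Implicit. Unset Printing Implicit Defensive.
Import Order.TTheory GRing.Theory Num.Theory.
Local Open Scope classical_set_scope.
Local Open Scope card_scope.

Lemma choiceN {A : Type} (P : nat -> A -> Prop) :
  (forall n, exists x, P n x) -> exists F : nat -> A, forall n, P n (F n).
Proof.
move=> H; exists (fun n => proj1_sig (cid (H n))) => n.
exact: proj2_sig (cid (H n)).
Qed.

Section Moiety2.
Variable V : countType.
Hypothesis infV : infinite_set [set: V].
Notation W := ((int * int) * V)%type.
Notation X := (@X V).

Lemma moiety : exists t t' g g' : W -> W,
  [/\ cancel t t', cancel t' t, cancel g g', cancel g' g &
  forall pi pi', cancel pi pi' -> cancel pi' pi -> exists a b c nu,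
    [/\ symX a, symX b, symX c, nu = id \/ nu = t' &
        pi = a \o g \o b \o g' \o c \o nu]].
Proof.
have [D1 [D2 [iD1 iD2 D12 dD]]] := split_inf infV.
pose emb0 := fun v : V => (((0%R : int), (0%R : int)), v).
have e0i : forall x y, emb0 x = emb0 y -> x = y by move=> x y [].
pose P1 := emb0 @` D1; pose P2 := emb0 @` D2.
have iP1 : infinite_set P1 by apply: inj_infinite => // x y _ _; apply: e0i.
have iP2 : infinite_set P2 by apply: inj_infinite => // x y _ _; apply: e0i.
have P12 : P1 `|` P2 = X.
  apply/seteqP; split.
  - by move=> w [[v _ <-]|[v _ <-]].
  - move=> [[m n] v] /= e; rewrite /X /= in e; rewrite e.
    have : (D1 `|` D2) v by rewrite D12.
    by case=> ?; [left|right]; exists v.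
have dP : forall w, P1 w -> P2 w -> False.
  by move=> w [v D1v <-] [u D2u /e0i e]; apply: (dD v) => //; rewrite -e.
have iX : infinite_set X.
  by apply: sub_infinite_set iP1 => w P1w; rewrite -P12; left.
have iY : infinite_set (~` X).
  have : infinite_set ((fun v : V => (((1%R : int), (0%R : int)), v)) @` setT).
    by apply: inj_infinite => // x y _ _ [].
  by apply: sub_infinite_set => _ [v _ <-] [].
have [x0 _] := infinite_setN0 iP1.
have [f1 f1b] : exists f, sbij X (~` X) f by apply: countinf_sbij.
have [f2 f2b] : exists f, sbij (~` X) X f by apply: countinf_sbij.
pose t := fun x => if pselect (X x) then f1 x else f2 x.
have tb : sbij setT setT t.
  have := sbij_glue f1b f2b (fun x a b => b a) (fun x a b => a b).
  by apply: sbij_eq; [rewrite setUCX|rewrite setUC setUCX].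
have [t' tK tK'] := sbijT_bij tb.
have tX : forall x, X x -> ~ X (t x).
  by move=> x Xx; rewrite /t; case: pselect => // Xx0; case: f1b => + _ _; apply.
have tY : forall x, ~ X x -> X (t x).
  by move=> x Xx; rewrite /t; case: pselect => // Xx0; case: f2b => + _ _; apply.
have iS2 : infinite_set (P2 `|` ~` X).
  by apply: sub_infinite_set iY => w ?; right.
have [k1 k1b] : exists f, sbij X (P2 `|` ~` X) f by apply: countinf_sbij.
have [k2 k2b] : exists f, sbij (~` X) P1 f by apply: countinf_sbij.
pose g := fun x => if pselect (X x) then k1 x else k2 x.
have gb : sbij setT setT g.
  have d2 : forall y, (P2 `|` ~` X) y -> P1 y -> False.
    move=> y [P2y|nXy] P1y; first by apply: (dP y).
    by apply: nXy; rewrite -P12; left.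
  have := sbij_glue k1b k2b (fun x a b => b a) d2.
  apply: sbij_eq; first by rewrite setUCX.
  rewrite setUC setUA [P1 `|` P2]P12 setUCX //.
have [g' gK gK'] := sbijT_bij gb.
have gY : forall w, ~ X w -> P1 (g w).
  by move=> w nXw; rewrite /g; case: pselect => // Xx0; case: k2b => + _ _; apply.
exists t, t', g, g'; split=> // pi pi' pK pK'.
have piinj : forall x y, pi x = pi y -> x = y by apply: can_inj pK.
have [fJ|iJ] := pselect (finite_set [set x | X x /\ X (pi x)]); last first.
  have [a [b [c [sa sb sc e]]]] := core gK gK' gY P12 dP iP1 iP2 pK pK' iJ.
  by exists a, b, c, id; split => //; left.
pose pi2 := pi \o t.
have p2K : cancel pi2 (t' \o pi') by move=> x; rewrite /pi2 /= pK tK.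
have p2K' : cancel (t' \o pi') pi2 by move=> x; rewrite /pi2 /= tK' pK'.
have iJ2 : infinite_set [set x | X x /\ X (pi2 x)].
  have ipre : infinite_set (pi' @` X).
    by apply: inj_infinite => // x y _ _ /(can_inj pK').
  have iS : infinite_set [set y | ~ X y /\ X (pi y)].
    move=> fS; apply: ipre.
    have : finite_set ([set x | X x /\ X (pi x)] `|` [set y | ~ X y /\ X (pi y)]).
      by rewrite finite_setU.
    apply: sub_finite_set => _ [x Xx <-].
    by have [?|?] := pselect (X (pi' x)); [left|right]; split; rewrite ?pK'.
  have : infinite_set (t' @` [set y | ~ X y /\ X (pi y)]).
    by apply: inj_infinite => // x y _ _ /(can_inj tK').
  apply: sub_infinite_set => _ [y [nXy Xpy] <-].
  have Xt'y : X (t' y).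
    have [//|nX] := pselect (X (t' y)).
    by case: nXy; have := tY _ nX; rewrite tK'.
  by split => //; rewrite /pi2 /= tK'.
have [a [b [c [sa sb sc e]]]] := core gK gK' gY P12 dP iP1 iP2 p2K p2K' iJ2.
exists a, b, c, t'; split => //; first by right.
have -> : pi = pi2 \o t' by apply: funext => x; rewrite /pi2 /= tK'.
by rewrite e.
Qed.

Definition fa (a : W -> W) (v : V) : V := (a ((0%R, 0%R), v)).2.

Lemma symX_X (a : W -> W) w : symX a -> X w -> X (a w).
Proof.
move=> [[a' aK aK'] aY] Xw; have [//|nX] := pselect (X (a w)).
have := aY _ nX; move=> /(can_inj aK) e; case: nX; by rewrite e.
Qed.

Lemma symX_Lf (a : W -> W) : symX a -> a = Lf (fa a).
Proof.
move=> sa; apply: funext => -[[m n] v]; rewrite /Lf /fa /=.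
case: eqP => [e|ne]; last by rewrite sa.2 // => e; apply: ne.
rewrite -e; have := symX_X sa (w := ((m, n), v)) e.
by rewrite /X /= -e; case: (a _) => [[m' n'] v'] /= ->.
Qed.

Lemma symX_inv (a a' : W -> W) : symX a -> cancel a a' -> cancel a' a -> symX a'.
Proof.
move=> [ab aY] aK aK'; split; first by exists a.
by move=> w nXw; apply: (bij_inv_fix aK aK'); apply: aY.
Qed.

Lemma fa_cancel (a a' : W -> W) : symX a -> cancel a a' -> cancel a' a -> cancel (fa a) (fa a').
Proof.
move=> sa aK aK' v; have sa' := symX_inv sa aK aK'.
rewrite /fa; have := symX_X sa (w := ((0%R, 0%R), v)) erefl.
case E: (a _) => [[m n] u] /= Xu; rewrite /X /= in Xu; rewrite -Xu -E aK //.
Qed.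

Lemma galvinW (C : set (W -> W)) : countable C -> C `<=` Sym W ->
  exists U, [/\ finite_set U, U `<=` Sym W & C `<=` gen U].
Proof.
move=> cC CS.
have [t [t' [g [g' [tK tK' gK gK' mo]]]]] := moiety.
have [iota iotai] := countable_injP _ cC.
pose en n := match pselect (exists f, C f /\ iota f = n) with
             | left H => proj1_sig (cid H) | right _ => id end.
have enC : forall f, C f -> en (iota f) = f.
  move=> f Cf; rewrite /en; case: pselect => [H|]; last by case; exists f.
  case: cid => f' [Cf' e] /=; apply: iotai => //; exact: mem_set.
have enb : forall n, exists en', cancel (en n) en' /\ cancel en' (en n).
  move=> n; rewrite /en; case: pselect => [H|_]; last by exists id.
  case: cid => f' [Cf' _] /=; have [f'' ? ?] := CS _ Cf'; by exists f''.
have [eni enK] := choiceN enb.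
have H : forall n, exists q : ((W -> W) * (W -> W)) * ((W -> W) * (W -> W)),
    [/\ symX q.1.1, symX q.1.2, symX q.2.1, q.2.2 = id \/ q.2.2 = t' &
        en n = q.1.1 \o g \o q.1.2 \o g' \o q.2.1 \o q.2.2].
  move=> n; have [a [b [c [nu [? ? ? ? ?]]]]] := mo _ _ (enK n).1 (enK n).2.
  by exists ((a, b), (c, nu)).
have [Q HQ] := choiceN H.
have HQ1 : forall n, symX (Q n).1.1 by move=> n; case: (HQ n).
have HQ2 : forall n, symX (Q n).1.2 by move=> n; case: (HQ n).
have HQ3 : forall n, symX (Q n).2.1 by move=> n; case: (HQ n).
have inv : forall a : W -> W, symX a -> exists a', cancel a a' /\ cancel a' a.
  by move=> a [[a' h1 h2] h3]; exists a'.
have [A' HA] := choiceN (fun n => inv _ (HQ1 n)).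
have [B' HB] := choiceN (fun n => inv _ (HQ2 n)).
have [C' HC] := choiceN (fun n => inv _ (HQ3 n)).
have [U1 [fU1 SU1 gU1]] := step1 (fun n => fa_cancel (HQ1 n) (HA n).1 (HA n).2)
  (fun n => fa_cancel (symX_inv (HQ1 n) (HA n).1 (HA n).2) (HA n).2 (HA n).1).
have [U2 [fU2 SU2 gU2]] := step1 (fun n => fa_cancel (HQ2 n) (HB n).1 (HB n).2)
  (fun n => fa_cancel (symX_inv (HQ2 n) (HB n).1 (HB n).2) (HB n).2 (HB n).1).
have [U3 [fU3 SU3 gU3]] := step1 (fun n => fa_cancel (HQ3 n) (HC n).1 (HC n).2)
  (fun n => fa_cancel (symX_inv (HQ3 n) (HC n).1 (HC n).2) (HC n).2 (HC n).1).
exists (U1 `|` U2 `|` U3 `|` [set t; g]); split.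
- rewrite !finite_setU; split; [split; [split|]|split]; by [|exact: finite_set1].
- move=> f [[[/SU1|/SU2]|/SU3]|[->|->]] //; [by exists t'|by exists g'].
- move=> f Cf; rewrite -(enC f Cf).
  set n := iota f; set U := (U1 `|` U2 `|` U3 `|` [set t; g]).
  have [_ _ _ hnu ->] := HQ n.
  have gt : gen U t by apply: gen_base; right; left.
  have gg : gen U g by apply: gen_base; right; right.
  have g1 : gen U (Q n).1.1.
    rewrite [X in gen U X](symX_Lf (HQ1 n)); apply: (gen_sub (X := U1)) => //.
    by move=> ? ?; left; left; left.
  have g2 : gen U (Q n).1.2.
    rewrite [X in gen U X](symX_Lf (HQ2 n)); apply: (gen_sub (X := U2)) => //.
    by move=> ? ?; left; left; right.
  have g3 : gen U (Q n).2.1.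
    rewrite [X in gen U X](symX_Lf (HQ3 n)); apply: (gen_sub (X := U3)) => //.
    by move=> ? ?; left; right.
  have gnu : gen U (Q n).2.2.
    case: hnu => ->; first exact: gen_id.
    exact: gen_inv gt tK tK'.
  have gg' : gen U g' by exact: gen_inv gg gK gK'.
  exact: gen_comp (gen_comp (gen_comp (gen_comp (gen_comp g1 gg) g2) gg') g3) gnu.
Qed.

End Moiety2.

Lemma galvinT (T : countType) : infinite_set [set: T] ->
  forall C : set (T -> T), countable C -> C `<=` Sym T ->
  exists U, [/\ finite_set U, U `<=` Sym T & C `<=` gen U].
Proof.
move=> iT C cC CS.
have [x0 _] := infinite_setN0 iT.
have iW : infinite_set [set: (int * int) * T].
  have : infinite_set ((fun v : T => (((0%R : int), (0%R : int)), v)) @` setT).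
    by apply: inj_infinite => // x y _ _ [].
  by apply: sub_infinite_set.
have [phi phib] : exists phi : T -> (int * int) * T, sbij setT setT phi.
  by apply: countinf_sbij => //; exact: ((0%R, 0%R), x0).
have [phi' pK pK'] := sbijT_bij phib.
pose C' := [set phi \o c \o phi' | c in C].
have cC' : countable C'.
  by apply: sub_countable cC; apply: card_image_le.
have C'S : C' `<=` Sym _.
  move=> _ [c Cc <-]; have [c' cK cK'] := CS c Cc.
  by exists (phi \o c' \o phi') => x /=; rewrite ?pK ?cK ?pK' ?cK'.
have [U' [fU' U'S CU']] := galvinW iT cC' C'S.
exists [set phi' \o u \o phi | u in U']; split.
- exact: finite_image.
- move=> _ [u Uu <-]; have [u' uK uK'] := U'S u Uu.
  by exists (phi' \o u' \o phi) => x /=; rewrite ?pK' ?uK ?pK ?uK'.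
- move=> c Cc.
  have := gen_conj pK' pK (CU' _ (ex_intro2 _ _ c Cc erefl)).
  have -> // : phi' \o (phi \o c \o phi') \o phi = c.
  by apply: funext => x /=; rewrite !pK.
Qed.

End MStep3.
Import MStep3.

Module MCount.
Set Implicit Arguments. Unset Strict Implicit. Unset Printing Implicit Defensive.
Local Open Scope classical_set_scope.
Local Open Scope card_scope.

Section GenCount.
Variable T : Type.
Variable X : set (T -> T).

Definition finv (f : T -> T) : T -> T :=
  match pselect (exists g, cancel f g /\ cancel g f) with
  | left H => proj1_sig (cid H) | right _ => f end.

Lemma finvE f g : cancel f g -> cancel g f -> finv f = g.
Proof.
move=> fg gf; rewrite /finv; case: pselect => [H|]; last by case; exists g.
case: cid => g' [fg' g'f] /=; apply: funext => y.
by rewrite -{1}(gf y) fg'.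
Qed.

Fixpoint Gn (n : nat) : set (T -> T) :=
  match n with
  | 0 => X `|` [set id]
  | n.+1 => Gn n `|` ((fun p => p.1 \o p.2) @` (Gn n `*` Gn n)) `|` (finv @` Gn n)
  end.

Lemma countableU U (A B : set U) : countable A -> countable B -> countable (A `|` B).
Proof.
move=> cA cB.
have : countable (\bigcup_(b in [set: bool]) (if b then A else B)).
  by apply: bigcup_countable => // -[].
apply: sub_countable; apply: subset_card_le => x [Ax|Bx].
- by exists true.
- by exists false.
Qed.

Lemma Gn_countable n : countable X -> countable (Gn n).
Proof.
move=> cX; elim: n => [|n IH] /=.
- by apply: countableU => //; apply: finite_set_countable; apply: finite_set1.
- apply: countableU; first apply: countableU => //.
  + by apply: sub_countable (countableX IH IH); apply: card_image_le.
  + by apply: sub_countable IH; apply: card_image_le.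
Qed.

Lemma Gn_mono n m : (n <= m)%N -> Gn n `<=` Gn m.
Proof.
elim: m => [|m IH]; first by rewrite leqn0 => /eqP ->.
rewrite leq_eqVlt => /orP[/eqP -> //|]; rewrite ltnS => /IH nm f Gf.
by left; left; apply: nm.
Qed.

Lemma gen_Gn f : gen X f -> exists n, Gn n f.
Proof.
elim=> [g Xg|| g h _ [n Hg] _ [m Hh]| g h _ [n Hg] gh hg].
- by exists 0%N; left.
- by exists 0%N; right.
- exists (maxn n m).+1; left; right; exists (g, h) => //; split.
  + by apply: (Gn_mono (leq_maxl n m)).
  + by apply: (Gn_mono (leq_maxr n m)).
- by exists n.+1; right; exists g => //; apply: finvE.
Qed.

Lemma gen_countable : countable X -> countable (gen X).
Proof.
move=> cX.
have : countable (\bigcup_(n in [set: nat]) Gn n).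
  by apply: bigcup_countable => // n _; apply: Gn_countable.
apply: sub_countable; apply: subset_card_le => f /gen_Gn [n Gf].
by exists n.
Qed.

End GenCount.

End MCount.
Import MCount.

Module MUncount.
Set Implicit Arguments. Unset Strict Implicit. Unset Printing Implicit Defensive.
Local Open Scope classical_set_scope.
Local Open Scope card_scope.

Lemma le_I1 T (S : set T) : (forall x y, S x -> S y -> x = y) -> S #<= `I_1.
Proof.
move=> h; apply/pcard_leP; apply/injfunPex; exists (fun _ => 0%N).
- by move=> x _; rewrite /= /`I_1 /=.
- by move=> x y /set_mem Sx /set_mem Sy _; apply: h.
Qed.

Lemma stab_uncountable (T : countType) (A : set (set T)) :
  partition A id [set: T] ->
  infinite_set [set Sigma | A Sigma /\ ~ (Sigma #<= `I_1)] ->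
  ~ countable (setwise_stab A).
Proof.
move=> [cov triv ne] /infiniteP /pcard_leP /injfunPex [b bB bi] cS.
have bA : forall k, A (b k) by move=> k; case: (bB k I).
have bi' : forall k k', b k = b k' -> k = k' by move=> k k' e; apply: bi; rewrite ?inE.
have two : forall k, exists pq : T * T, [/\ b k pq.1, b k pq.2 & pq.1 <> pq.2].
  move=> k; have [//|H] := pselect (exists pq : T * T, [/\ b k pq.1, b k pq.2 & pq.1 <> pq.2]).
  case: (bB k I) => _ []; apply: le_I1 => x y bx bY.
  have [//|nxy] := pselect (x = y); by case: H; exists (x, y).
have [PQ HPQ] := choiceN two.
pose p k := (PQ k).1; pose q k := (PQ k).2.
have pb : forall k, b k (p k) by move=> k; case: (HPQ k).
have qb : forall k, b k (q k) by move=> k; case: (HPQ k).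
have pq : forall k, p k <> q k by move=> k; case: (HPQ k).
have uniq : forall k k' x, b k x -> b k' x -> k = k'.
  move=> k k' x bkx bk'x; apply: bi'; apply: triv => //; by exists x.
pose sw (S : set nat) x := match pselect (exists k, S k /\ (x = p k \/ x = q k)) with
  | left H => let k := proj1_sig (cid H) in if x == p k then q k else p k
  | right _ => x end.
have sw_p : forall S k, S k -> sw S (p k) = q k.
  move=> S k Sk; rewrite /sw; case: pselect => [H|]; last by case; exists k; split => //; left.
  case: cid => k' [S'k' hk'] /=.
  have e : k' = k by apply: (uniq _ _ (p k)) => //; case: hk' => ->.
  by rewrite e eqxx.
have sw_q : forall S k, S k -> sw S (q k) = p k.
  move=> S k Sk; rewrite /sw; case: pselect => [H|]; last by case; exists k; split => //; right.
  case: cid => k' [S'k' hk'] /=.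
  have e : k' = k by apply: (uniq _ _ (q k)) => //; case: hk' => ->.
  rewrite e; case: eqP => // e'; by case: (pq k).
have sw_out : forall S x, ~ (exists k, S k /\ (x = p k \/ x = q k)) -> sw S x = x.
  by move=> S x H; rewrite /sw; case: pselect.
have swK : forall S, cancel (sw S) (sw S).
  move=> S x; have [[k [Sk [->|->]]]|H] := pselect (exists k, S k /\ (x = p k \/ x = q k)).
  - by rewrite sw_p // sw_q.
  - by rewrite sw_q // sw_p.
  - by rewrite !sw_out.
have swS : forall S Sigma x, A Sigma -> Sigma x -> Sigma (sw S x).
  move=> S Sigma x ASig Sx.
  have [[k [Sk hk]]|H] := pselect (exists k, S k /\ (x = p k \/ x = q k)); last by rewrite sw_out.
  have e : Sigma = b k.
    apply: triv => //; exists x; split => //; by case: hk => ->.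
  by rewrite e; case: hk => ->; rewrite ?sw_p ?sw_q.
have swstab : forall S, setwise_stab A (sw S).
  move=> S; split; first by exists (sw S).
  move=> Sigma ASig; apply/seteqP; split.
  - by move=> _ [x Sx <-]; apply: swS.
  - move=> y Sy; exists (sw S y); first exact: swS.
    exact: swK.
have swinj : forall S S', sw S = sw S' -> S = S'.
  move=> S S' e; apply: funext => k; apply: propext.
  wlog suff : S S' e / S k -> S' k.
    by move=> h; split; apply: h.
  move=> Sk; have [//|nS'k] := pselect (S' k); exfalso.
  have := congr1 (fun f => f (p k)) e; rewrite /= sw_p // sw_out.
  - by move=> e'; apply: (pq k); rewrite e'.
  - move=> [k' [S'k' hk']]; apply: nS'k.
    have -> : k = k' by apply: (uniq _ _ (p k)) => //; case: hk' => ->.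
    done.
have [iota iotai] := countable_injP _ cS.
pose j S := iota (sw S).
have ji : forall S S', j S = j S' -> S = S'.
  by move=> S S' e; apply: swinj; apply: iotai; rewrite ?inE.
pose D := [set n | exists S, j S = n /\ ~ S n].
have : D (j D) <-> ~ D (j D).
  split.
  - by move=> [S [/ji -> nS]].
  - by move=> nD; exists D.
case=> h1 h2.
have nD : ~ D (j D) by move=> dd; exact: (h1 dd dd).
exact: nD (h2 nD).
Qed.

End MUncount.
Import MUncount.

Module MPart3.
Set Implicit Arguments. Unset Strict Implicit. Unset Printing Implicit Defensive.
Local Open Scope classical_set_scope.
Local Open Scope card_scope.

Lemma finite_seqE (T : countType) (A : set T) :
  finite_set A -> exists s : seq T, A = [set x | x \in s].
Proof.
move=> /finite_fsetP [X ->]; exists (finmap.enum_fset X).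
by apply/seteqP; split=> x /=.
Qed.

Section Part3.
Variable T : countType.
Variable x0 : T.
Variable G : set (T -> T).
Hypothesis sG : subgroup G.

Lemma sG_sym : G `<=` Sym T. Proof. by case: sG. Qed.
Lemma sG_id : G id. Proof. by case: sG. Qed.
Lemma sG_comp f g : G f -> G g -> G (f \o g). Proof. by case: sG => _ _ H _; apply: H. Qed.
Lemma sG_inv f : G f -> exists g, [/\ G g, cancel f g & cancel g f].
Proof. by case: sG => _ _ _ H; apply: H. Qed.

Lemma sG_finv f : G f -> [/\ G (finv f), cancel f (finv f) & cancel (finv f) f].
Proof. by move=> /sG_inv [g [Gg fg gf]]; rewrite (finvE fg gf). Qed.

Lemma uniq_stab (Gamma : set T) :
  pt_stab G Gamma = [set id] ->
  forall g h, G g -> G h -> (forall x, Gamma x -> g x = h x) -> h = g.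
Proof.
move=> st g h Gg Gh e.
have [Gg' gK gK'] := sG_finv Gg.
have : pt_stab G Gamma (finv g \o h).
  split; first exact: sG_comp.
  by move=> x Gx /=; rewrite -e // gK.
rewrite st => /= E; apply: funext => x.
by rewrite -[h x]gK' -[finv g (h x)]/((finv g \o h) x) E.
Qed.

Lemma ii_iii :
  (exists Gamma : set T, finite_set Gamma /\ pt_stab G Gamma = [set id]) <->
  discrete_in_Sym G.
Proof.
split.
- move=> [Gamma [fG st]] g Gg; exists Gamma; split => // h Gh ag.
  by apply: (uniq_stab st) => // x /ag ->.
- move=> /(_ _ sG_id) [Gamma [fG H]]; exists Gamma; split => //.
  apply/seteqP; split.
  + by move=> h [Gh fx]; apply: H => // x /fx.
  + by move=> _ ->; split; [exact: sG_id|].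
Qed.

Lemma ii_i :
  (exists Gamma : set T, finite_set Gamma /\ pt_stab G Gamma = [set id]) ->
  countable G /\ closed_in_Sym G.
Proof.
move=> [Gamma [fG st]]; have [s sE] := finite_seqE fG.
split.
- apply/countable_injP; exists (fun g => pickle (map g s)).
  move=> g h /set_mem Gg /set_mem Gh /(pcan_inj pickleK) e.
  apply: esym; apply: (uniq_stab st) => // x; rewrite sE /= => xs.
  by have := congr1 (nth x0 ^~ (index x s)) e; rewrite !(nth_map x0) ?index_mem // nth_index.
- move=> f Sf nGf.
  have [[g [Gg ag]]|nex] := pselect (exists g, G g /\ agree_on Gamma f g); last first.
    exists Gamma; split => // g _ ag Gg; apply: nex; by exists g.
  have [z gz] : exists z, g z <> f z.
    have [//|H] := pselect (exists z, g z <> f z); case: nGf.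
    have -> : f = g; last done.
    apply: funext => z; have [//|ne] := pselect (f z = g z).
    by case: H; exists z => e; apply: ne.
  exists (Gamma `|` [set z]); split.
  + by rewrite finite_setU; split => //; exact: finite_set1.
  + move=> h _ ah Gh; have hg : h = g.
      apply: (uniq_stab st) => // x Gx; rewrite (ag x Gx) (ah x) //; by left.
    by apply: gz; rewrite -hg ah //; right.
Qed.

Lemma i_ii : countable G -> closed_in_Sym G ->
  exists Gamma : set T, finite_set Gamma /\ pt_stab G Gamma = [set id].
Proof.
move=> cG clG.
have [//|H0] := pselect (exists Gamma : set T, finite_set Gamma /\ pt_stab G Gamma = [set id]).
exfalso.
have Hnt : forall s : seq T, exists k, [/\ G k, (forall x, x \in s -> k x = x) & k <> id].
  move=> s; have [//|Hn] := pselect (exists k, [/\ G k, (forall x, x \in s -> k x = x) & k <> id]).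
  case: H0; exists [set x | x \in s]; split.
    exact: finite_seq.
  apply/seteqP; split.
  - move=> k [Gk fk]; have [//|nk] := pselect (k = id).
    by case: Hn; exists k; split => // x xs; apply: fk.
  - by move=> _ ->; split; [exact: sG_id|].
have [kf kfP] : exists kf : seq T -> (T -> T),
    forall s, [/\ G (kf s), (forall x, x \in s -> kf s x = x) & kf s <> id].
  by exists (fun s => proj1_sig (cid (Hnt s))) => s; exact: proj2_sig (cid (Hnt s)).
have [iota iotai] := countable_injP _ cG.
pose ge n := match pselect (exists f, G f /\ iota f = n) with
             | left H => proj1_sig (cid H) | right _ => id end.
have geC : forall f, G f -> ge (iota f) = f.
  move=> f Gf; rewrite /ge; case: pselect => [H|]; last by case; exists f.
  case: cid => f' [Gf' e] /=; apply: iotai => //; exact: mem_set.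
pose zf (h g : T -> T) := match pselect (exists z, h z <> g z) with
             | left H => proj1_sig (cid H) | right _ => x0 end.
have zfP : forall h g, (exists z, h z <> g z) -> h (zf h g) <> g (zf h g).
  move=> h g H; rewrite /zf; case: pselect => // H'; exact: proj2_sig (cid H').
pose xe n := odflt x0 (unpickle n).
have xeP : forall y, xe (pickle y) = y by move=> y; rewrite /xe pickleK.
pose step (n : nat) (st : (T -> T) * seq T) :=
  let h := st.1 in let s := st.2 in
  let D := s ++ map (finv h) s in
  let h' := if pselect (exists z, h z <> ge n z) then h else h \o kf D in
  (h', xe n :: zf h' (ge n) :: D).
pose sq := fix sq n := if n is n'.+1 then step n' (sq n') else (id, [::]).
pose hh n := (sq n).1; pose ss n := (sq n).2.
have hS : forall n, hh n.+1 = if pselect (exists z, hh n z <> ge n z) then hh n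
    else hh n \o kf (ss n ++ map (finv (hh n)) (ss n)) by [].
have sS : forall n, ss n.+1 = xe n :: zf (hh n.+1) (ge n) ::
    (ss n ++ map (finv (hh n)) (ss n)) by [].
have F1 : forall n, G (hh n).
  elim=> [|n IH]; first exact: sG_id.
  rewrite hS; case: pselect => // Hps; apply: sG_comp => //.
  by case: (kfP (ss n ++ map (finv (hh n)) (ss n))).
have F2 : forall n x, x \in ss n -> x \in ss n.+1.
  by move=> n x xs; rewrite sS !inE mem_cat xs !orbT.
have F2' : forall n x, x \in ss n -> finv (hh n) x \in ss n.+1.
  by move=> n x xs; rewrite sS !inE mem_cat map_f ?orbT.
have F3 : forall n x, x \in ss n ++ map (finv (hh n)) (ss n) -> hh n.+1 x = hh n x.
  move=> n x xD; rewrite hS; case: pselect => // Hps /=.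
  by case: (kfP (ss n ++ map (finv (hh n)) (ss n))) => _ -> .
have F4 : forall n, xe n \in ss n.+1 by move=> n; rewrite sS inE eqxx.
have F5 : forall n, hh n.+1 (zf (hh n.+1) (ge n)) <> ge n (zf (hh n.+1) (ge n)).
  move=> n; apply: zfP; rewrite hS; case: pselect => // nex.
  have [kid Gk] : exists z, kf (ss n ++ map (finv (hh n)) (ss n)) z <> z.
    case: (kfP (ss n ++ map (finv (hh n)) (ss n))) => _ _ nid.
    have [//|nz] := pselect (exists z, kf (ss n ++ map (finv (hh n)) (ss n)) z <> z).
    case: nid; apply: funext => z; have [//|ne] := pselect (kf (ss n ++ map (finv (hh n)) (ss n)) z = z).
    by case: nz; exists z.
  exists kid => /= e.
  have [_ hb _] := sG_finv (F1 n).
  have e2 : hh n kid = ge n kid.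
    have [//|ne] := pselect (hh n kid = ge n kid); by case: nex; exists kid.
  apply: Gk; apply: (can_inj hb); by rewrite e e2.
have F5' : forall n, zf (hh n.+1) (ge n) \in ss n.+1.
  by move=> n; rewrite sS !inE eqxx orbT.
have mono : forall n k x, x \in ss n -> x \in ss (n + k).
  by move=> n; elim=> [|k IH] x xs; rewrite ?addn0 // addnS; apply: F2; apply: IH.
have stab : forall n k x, x \in ss n -> hh (n + k) x = hh n x.
  move=> n; elim=> [|k IH] x xs; rewrite ?addn0 // addnS F3 ?IH //.
  by rewrite mem_cat mono.
have monoL : forall n m x, (n <= m)%N -> x \in ss n -> x \in ss m.
  by move=> n m x nm xs; rewrite -(subnKC nm); apply: mono.
have stabL : forall n m x, (n <= m)%N -> x \in ss n -> hh m x = hh n x.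
  by move=> n m x nm xs; rewrite -(subnKC nm); apply: stab.
have inS : forall x, x \in ss (pickle x).+1 by move=> x; have := F4 (pickle x); rewrite xeP.
pose f x := hh (pickle x).+1 x.
have fE : forall n x, x \in ss n -> f x = hh n x.
  move=> n x xs; rewrite /f -(stabL _ (maxn n (pickle x).+1) _ (leq_maxr _ _) (inS x)).
  by rewrite (stabL _ _ _ (leq_maxl _ _) xs).
have fb : bijective f.
  apply: sbijT_bij; split => //.
  - move=> x y _ _; set n := maxn (pickle x).+1 (pickle y).+1.
    have xs : x \in ss n by apply: monoL (inS x); apply: leq_maxl.
    have ys : y \in ss n by apply: monoL (inS y); apply: leq_maxr.
    rewrite (fE _ _ xs) (fE _ _ ys).
    by have [_ hK _] := sG_finv (F1 n); move/(can_inj hK).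
  - move=> y _; set n := (pickle y).+1.
    exists (finv (hh n) y) => //.
    rewrite (fE _ _ (F2' _ _ (inS y))) F3; last by rewrite mem_cat map_f ?orbT.
    by have [_ _ ->] := sG_finv (F1 n).
have Gf : G f.
  have [//|nGf] := pselect (G f).
  have [Gam [fGam HGam]] := clG _ fb nGf.
  have [s0 s0E] := finite_seqE fGam.
  have [n ns] : exists n, forall x, x \in s0 -> x \in ss n.
    elim: s0 {s0E} => [|x s0 [n IH]]; first by exists 0%N.
    exists (maxn n (pickle x).+1) => y; rewrite inE => /orP[/eqP ->|ys].
    + by apply: monoL (inS x); apply: leq_maxr.
    + by apply: monoL (IH _ ys); apply: leq_maxl.
  exfalso; apply: (HGam (hh n)) => //; first exact: sG_sym (F1 n).
  by move=> x; rewrite s0E /= => xs; rewrite (fE n) // ns.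
by have := F5 (iota f); rewrite -(fE _ _ (F5' (iota f))) geC.
Qed.

End Part3.

End MPart3.
Import MPart3.

Unset Implicit Arguments.
Local Open Scope classical_set_scope.
Local Open Scope card_scope.

Theorem theorem8p1 (T : Type) (countT : countable [set: T])
    (infT : infinite_set [set: T]) :
  (* the countable subgroups form an equivalence class under ≈ *)
  ((forall G H : set (T -> T), subgroup G -> subgroup H ->
      countable G -> countable H -> approx G H) /\
   (forall G H : set (T -> T), subgroup G -> subgroup H ->
      countable G -> approx G H -> countable H)) /\
  (* G ≺ S_(A) for suitable partitions A *)
  (forall (G : set (T -> T)) (A : set (set T)),
      subgroup G -> countable G ->
      partition A id [set: T] ->
      (exists n : nat, forall Sigma, A Sigma -> Sigma #<= `I_n) ->
      infinite_set [set Sigma | A Sigma /\ ~ (Sigma #<= `I_1)] ->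
      prec G (setwise_stab A)) /\
  (* (i) <-> (ii) <-> (iii) *)
  (forall G : set (T -> T), subgroup G ->
     ((countable G /\ closed_in_Sym G) <->
        (exists Gamma : set T, finite_set Gamma /\ pt_stab G Gamma = [set id])) /\
     ((exists Gamma : set T, finite_set Gamma /\ pt_stab G Gamma = [set id]) <->
        discrete_in_Sym G)).
Proof.
case: (Pcountable countT) => T' eT; subst T.
have [x0 _] := infinite_setN0 infT.
have pre : forall G H : set (T' -> T'), subgroup G -> countable G -> preceq G H.
  move=> G H sG cG; have [U [fU US GU]] := galvinT infT cG (sG_sym sG).
  exists U; split => // f /GU; apply: gen_sub => g Ug; by right.
have cnt : forall G H : set (T' -> T'), countable G -> preceq H G -> countable H.
  move=> G H cG [U [fU US HU]].
  have : countable (gen (G `|` U)).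
    by apply: gen_countable; apply: countableU => //; apply: finite_set_countable.
  by apply: sub_countable; apply: subset_card_le.
split; [split|split].
- by move=> G H sG sH cG cH; split; apply: pre.
- by move=> G H sG sH cG [_ HG]; apply: cnt HG.
- move=> G A sG cG pA _ iA; split; first exact: pre.
  move=> HG; apply: (stab_uncountable pA iA); exact: cnt HG.
- move=> G sG; split.
  + split; first by move=> [cG clG]; apply: i_ii.
    exact: ii_i.
  + exact: ii_iii.
Qed.
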